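(* Consider the semi-discrete scheme $\frac{d}{dt}\mathbf U_{i,j}=-\frac{\mathcal F_{i+\frac12,j}-\mathcal F_{i-\frac12,j}}{\Delta x}-\frac{\mathcal G_{i,j+\frac12}-\mathcal G_{i,j-\frac12}}{\Delta y}+\mathbf S_{i,j}$ with time-independent bottom values $\mathbf B_{i,j}$ and source $\mathbf S_{i,j}$ as in the context. Suppose the numerical fluxes $\mathcal F_{i+\frac12,j},\mathcal G_{i,j+\frac12}\in\mathbb R^{3K}$ satisfy, for all $i,j$, $$[\![\mathbf V]\!]_{i+\frac12,j}^\top\mathcal F_{i+\frac12,j}=[\![\mathbf\Psi]\!]_{i+\frac12,j}+g[\![\mathbf B]\!]_{i+\frac12,j}^\top\mathcal P(\overline{\mathbf h}_{i+\frac12,j})\overline{\mathbf u}_{i+\frac12,j},\quad [\![\mathbf V]\!]_{i,j+\frac12}^\top\mathcal G_{i,j+\frac12}=[\![\mathbf\Phi]\!]_{i,j+\frac12}+g[\![\mathbf B]\!]_{i,j+\frac12}^\top\mathcal P(\overline{\mathbf h}_{i,j+\frac12})\overline{\mathbf v}_{i,j+\frac12}.$$ Then the scheme is energy conservative: $\frac{d}{dt}\mathbf E_{i,j}=-\frac{\mathcal H_{i+\frac12,j}-\mathcal H_{i-\frac12,j}}{\Delta x}-\frac{\mathcal K_{i,j+\frac12}-\mathcal K_{i,j-\frac12}}{\Delta y}$ for all $i,j$, with numerical energy fluxes $$\mathcal H_{i+\frac12,j}=\overline{\mathbf V}_{i+\frac12,j}^\top\mathcal F_{i+\frac12,j}-\overline{\mathbf\Psi}_{i+\frac12,j}-\tfrac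 g4[\![\mathbf B]\!]_{i+\frac12,j}^\top\mathcal P(\overline{\mathbf h}_{i+\frac12,j})[\![\mathbf u]\!]_{i+\frac12,j},$$ $$\mathcal K_{i,j+\frac12}=\overline{\mathbf V}_{i,j+\frac12}^\top\mathcal G_{i,j+\frac12}-\overline{\mathbf\Phi}_{i,j+\frac12}-\tfrac g4[\![\mathbf B]\!]_{i,j+\frac12}^\top\mathcal P(\overline{\mathbf h}_{i,j+\frac12})[\![\mathbf v]\!]_{i,j+\frac12}.$$
   Context: Let $\mathcal M_k\in\mathbb R^{K\times K}$, $(\mathcal M_k)_{l,m}=\int\phi_k\phi_l\phi_m\rho$, where $\phi_1\equiv1,\dots,\phi_K$ are polynomials orthonormal with respect to a probability density $\rho$; $\mathcal P(\widehat z)=\sum_k\widehat z_k\mathcal M_k$; $g>0$. Uniform rectangular grid with cell sizes $\Delta x,\Delta y$; cell values $\mathbf U_{i,j}=(\mathbf h_{i,j},\mathbf q^x_{i,j},\mathbf q^y_{i,j})\in\mathbb R^{3K}$ with $\mathcal P(\mathbf h_{i,j})$ positive definite, bottom $\mathbf B_{i,j}\in\mathbb R^K$; $\mathbf u_{i,j}=\mathcal P^{-1}(\mathbf h_{i,j})\mathbf q^x_{i,j}$, $\mathbf v_{i,j}=\mathcal P^{-1}(\mathbf h_{i,j})\mathbf q^y_{i,j}$. Averages/jumps: $\overline{\mathbf a}_{i+\frac12,j}=\tfrac12(\mathbf a_{i,j}+\mathbf a_{i+1,j})$, $[\![\mathbf a]\!]_{i+\frac12,j}=\mathbf a_{i+1,j}-\mathbf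 a_{i,j}$, analogously in $j$. Source: $\mathbf S_{i,j}=\Big(0;\ -\tfrac{g}{2\Delta x}\big(\mathcal P(\overline{\mathbf h}_{i+\frac12,j})[\![\mathbf B]\!]_{i+\frac12,j}+\mathcal P(\overline{\mathbf h}_{i-\frac12,j})[\![\mathbf B]\!]_{i-\frac12,j}\big);\ -\tfrac{g}{2\Delta y}\big(\mathcal P(\overline{\mathbf h}_{i,j+\frac12})[\![\mathbf B]\!]_{i,j+\frac12}+\mathcal P(\overline{\mathbf h}_{i,j-\frac12})[\![\mathbf B]\!]_{i,j-\frac12}\big)\Big)$. Discrete entropy quantities: $\mathbf E_{i,j}=\tfrac12\big((\mathbf q^x_{i,j})^\top\mathbf u_{i,j}+(\mathbf q^y_{i,j})^\top\mathbf v_{i,j}\big)+\tfrac12 g\|\mathbf h_{i,j}\|^2+g\mathbf h_{i,j}^\top\mathbf B_{i,j}$; $\mathbf V_{i,j}=(\partial\mathbf E_{i,j}/\partial\mathbf U_{i,j})^\top=\big(-\tfrac12\mathcal P(\mathbf u_{i,j})\mathbf u_{i,j}-\tfrac12\mathcal P(\mathbf v_{i,j})\mathbf v_{i,j}+g(\mathbf h_{i,j}+\mathbf B_{i,j});\ \mathbf u_{i,j};\ \mathbf v_{i,j}\big)$; $\mathbf\Psi_{i,j}=\tfrac12 g\,\mathbf u_{i,j}^\top\mathcal P(\mathbf h_{i,j})\mathbf h_{i,j}$; $\mathbf\Phi_{i,j}=\tfrac12 g\,\mathbf v_{i,j}^\top\mathcal P(\mathbf h_{i,j})\mathbf h_{i,j}$.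 *)

(* Defs.v *)
From HB Require Import structures.
From mathcomp Require Import all_boot all_order all_algebra.
From mathcomp Require Import all_classical all_reals all_analysis.
Set Implicit Arguments. Unset Strict Implicit. Unset Printing Implicit Defensive.
Import Order.TTheory GRing.Theory Num.Theory.
Import numFieldNormedType.Exports.
Local Open Scope classical_set_scope.
Local Open Scope ring_scope.

Section SGDefs.
Variable R : realType.
Variable K : nat.

Definition prob_density (rho : R -> R) : Prop :=
  [/\ measurable_fun setT rho, (forall x, 0 <= rho x) &
      (\int[lebesgue_measure]_(x in setT) (rho x)%:E = 1)%E ].

(* phi_0,...,phi_{K-1} (the paper's phi_1,...,phi_K) are polynomials,
   orthonormal in L^2(rho), with the first one the constant 1. *)
Definition orthonormal_polys (rho : R -> R) (phi : 'I_K -> {poly R}) : Prop :=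
  (forall k l : 'I_K,
     lebesgue_measure.-integrable setT
        (fun x => ((phi k).[x] * (phi l).[x] * rho x)%:E) /\
     \int[lebesgue_measure]_(x in setT) ((phi k).[x] * (phi l).[x] * rho x)
       = (k == l)%:R)
  /\ (forall k : 'I_K, val k = 0%N -> phi k = 1).

Definition Mtens (rho : R -> R) (phi : 'I_K -> {poly R}) (k : 'I_K) : 'M[R]_K :=
  \matrix_(l, m) \int[lebesgue_measure]_(x in setT)
                    ((phi k).[x] * (phi l).[x] * (phi m).[x] * rho x).

Variable M : 'I_K -> 'M[R]_K.
Variable g : R.

Definition Pm (z : 'cV[R]_K) : 'M[R]_K := \sum_(k < K) (z k 0) *: M k.

Definition dotv n (a b : 'cV[R]_n) : R := (a^T *m b) 0 0.

Definition posdef n (A : 'M[R]_n) : Prop :=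
  forall x : 'cV[R]_n, x != 0 -> 0 < dotv x (A *m x).

Definition vel (h q : 'cV[R]_K) : 'cV[R]_K := invmx (Pm h) *m q.

Definition stateU (h qx qy : 'cV[R]_K) : 'cV[R]_(K + (K + K)) :=
  col_mx h (col_mx qx qy).

Definition energy (h qx qy B : 'cV[R]_K) : R :=
  2^-1 * (dotv qx (vel h qx) + dotv qy (vel h qy))
  + 2^-1 * g * dotv h h + g * dotv h B.

Definition entvar (h qx qy B : 'cV[R]_K) : 'cV[R]_(K + (K + K)) :=
  let u := vel h qx in let v := vel h qy in
  col_mx (- (2^-1 *: (Pm u *m u)) - 2^-1 *: (Pm v *m v) + g *: (h + B))
         (col_mx u v).

(* Psi (with q = q^x) and Phi (with q = q^y) *)
Definition entflux (h q : 'cV[R]_K) : R := 2^-1 * g * dotv (vel h q) (Pm h *m h).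

Section Grid.
Variables (h qx qy : int -> int -> R -> 'cV[R]_K) (B : int -> int -> 'cV[R]_K).

Definition uG i j t := vel (h i j t) (qx i j t).
Definition vG i j t := vel (h i j t) (qy i j t).
Definition UG i j t := stateU (h i j t) (qx i j t) (qy i j t).
Definition EG i j t := energy (h i j t) (qx i j t) (qy i j t) (B i j).
Definition VG i j t := entvar (h i j t) (qx i j t) (qy i j t) (B i j).
Definition PsiG i j t := entflux (h i j t) (qx i j t).
Definition PhiG i j t := entflux (h i j t) (qy i j t).

(* interface x_{i+1/2,j} is between cells (i,j) and (i+1,j);
   interface y_{i,j+1/2} is between cells (i,j) and (i,j+1). *)
Definition avgx n (a : int -> int -> 'cV[R]_n) i j := 2^-1 *: (a i j + a (i + 1)%R j).
Definition jmpx n (a : int -> int -> 'cV[R]_n) i j := a (i + 1)%R j - a i j.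
Definition avgy n (a : int -> int -> 'cV[R]_n) i j := 2^-1 *: (a i j + a i (j + 1)%R).
Definition jmpy n (a : int -> int -> 'cV[R]_n) i j := a i (j + 1)%R - a i j.
Definition avgxs (a : int -> int -> R) i j : R := 2^-1 * (a i j + a (i + 1)%R j).
Definition jmpxs (a : int -> int -> R) i j : R := a (i + 1)%R j - a i j.
Definition avgys (a : int -> int -> R) i j : R := 2^-1 * (a i j + a i (j + 1)%R).
Definition jmpys (a : int -> int -> R) i j : R := a i (j + 1)%R - a i j.

Definition srcS (dx dy : R) i j t : 'cV[R]_(K + (K + K)) :=
  let ht := fun a b => h a b t in
  col_mx 0
   (col_mx
     (- (g / (2 * dx)) *:
        (Pm (avgx ht i j) *m jmpx B i j + Pm (avgx ht (i - 1)%R j) *m jmpx B (i - 1)%R j))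
     (- (g / (2 * dy)) *:
        (Pm (avgy ht i j) *m jmpy B i j + Pm (avgy ht i (j - 1)%R) *m jmpy B i (j - 1)%R))).

(* numerical energy fluxes; F i j t = F_{i+1/2,j}(t), G i j t = G_{i,j+1/2}(t) *)
Definition HfluxG (F : int -> int -> R -> 'cV[R]_(K + (K + K))) i j t : R :=
  dotv (avgx (fun a b => VG a b t) i j) (F i j t)
  - avgxs (fun a b => PsiG a b t) i j
  - g / 4 * dotv (jmpx B i j)
              (Pm (avgx (fun a b => h a b t) i j) *m jmpx (fun a b => uG a b t) i j).

Definition KfluxG (G : int -> int -> R -> 'cV[R]_(K + (K + K))) i j t : R :=
  dotv (avgy (fun a b => VG a b t) i j) (G i j t)
  - avgys (fun a b => PhiG a b t) i j
  - g / 4 * dotv (jmpy B i j)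
              (Pm (avgy (fun a b => h a b t) i j) *m jmpy (fun a b => vG a b t) i j).

End Grid.
End SGDefs.

(* Main.v *)
Require Import Defs.
From HB Require Import structures.
From mathcomp Require Import all_boot all_order all_algebra.
From mathcomp Require Import all_classical all_reals all_analysis.
Import Order.TTheory GRing.Theory Num.Theory.
Import numFieldNormedType.Exports.
Local Open Scope ring_scope.
From mathcomp Require Import ring lra.



Section Alg.
Variable R : realType.

Lemma dotvE n (a b : 'cV[R]_n) : dotv a b = \sum_k a k 0 * b k 0.
Proof. by rewrite /dotv mxE; apply: eq_bigr => k _; rewrite mxE. Qed.

Lemma dotvDl n (a b c : 'cV[R]_n) : dotv (a + b) c = dotv a c + dotv b c.
Proof. by rewrite /dotv linearD /= mulmxDl mxE. Qed.
Lemma dotvDr n (a b c : 'cV[R]_n) : dotv c (a + b) = dotv c a + dotv c b.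
Proof. by rewrite /dotv mulmxDr mxE. Qed.
Lemma dotvZl n k (a c : 'cV[R]_n) : dotv (k *: a) c = k * dotv a c.
Proof. by rewrite /dotv linearZ /= -scalemxAl mxE. Qed.
Lemma dotvZr n k (a c : 'cV[R]_n) : dotv c (k *: a) = k * dotv c a.
Proof. by rewrite /dotv -scalemxAr mxE. Qed.
Lemma dotvNl n (a c : 'cV[R]_n) : dotv (- a) c = - dotv a c.
Proof. by rewrite -scaleN1r dotvZl mulN1r. Qed.
Lemma dotvNr n (a c : 'cV[R]_n) : dotv c (- a) = - dotv c a.
Proof. by rewrite -scaleN1r dotvZr mulN1r. Qed.
Lemma dotvBl n (a b c : 'cV[R]_n) : dotv (a - b) c = dotv a c - dotv b c.
Proof. by rewrite dotvDl dotvNl. Qed.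
Lemma dotvBr n (a b c : 'cV[R]_n) : dotv c (a - b) = dotv c a - dotv c b.
Proof. by rewrite dotvDr dotvNr. Qed.
Lemma dotvC n (a b : 'cV[R]_n) : dotv a b = dotv b a.
Proof. by rewrite !dotvE; apply: eq_bigr => k _; rewrite mulrC. Qed.
Lemma dotv0r n (a : 'cV[R]_n) : dotv a 0 = 0.
Proof. by rewrite /dotv mulmx0 mxE. Qed.
Lemma dotv_mul n (a b : 'cV[R]_n) (P : 'M[R]_n) : dotv a (P *m b) = dotv (P^T *m a) b.
Proof. by rewrite /dotv trmx_mul trmxK mulmxA. Qed.
Lemma dotv_sym n (a b : 'cV[R]_n) (P : 'M[R]_n) : P^T = P -> dotv a (P *m b) = dotv b (P *m a).
Proof. by move=> sP; rewrite dotv_mul sP dotvC. Qed.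
Lemma dotv_col m n (a c : 'cV[R]_m) (b d : 'cV[R]_n) :
  dotv (col_mx a b) (col_mx c d) = dotv a c + dotv b d.
Proof. by rewrite /dotv tr_col_mx mul_row_col mxE. Qed.

Lemma xdir N K (V0 V1 Vm F0 Fm : 'cV[R]_N) (u0 u1 um b0 bm : 'cV[R]_K)
  (P0 P1 : 'M[R]_K) (ps0 ps1 psm g dx : R) :
  P0^T = P0 -> P1^T = P1 -> dx != 0 ->
  dotv (V1 - V0) F0 = (ps1 - ps0) + g * dotv b0 (P0 *m (2^-1 *: (u0 + u1))) ->
  dotv (V0 - Vm) Fm = (ps0 - psm) + g * dotv bm (P1 *m (2^-1 *: (um + u0))) ->
  dotv V0 (- (dx^-1 *: (F0 - Fm))) + dotv u0 (- (g / (2 * dx)) *: (P0 *m b0 + P1 *m bm))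
  = - (((dotv (2^-1 *: (V0 + V1)) F0 - 2^-1 * (ps0 + ps1)
          - g / 4 * dotv b0 (P0 *m (u1 - u0)))
       - (dotv (2^-1 *: (Vm + V0)) Fm - 2^-1 * (psm + ps0)
          - g / 4 * dotv bm (P1 *m (u0 - um)))) / dx).
Proof.
move=> s0 s1 dx0 c1 c2.
have e1 : dotv V0 F0 = dotv (2^-1 *: (V0 + V1)) F0 - 2^-1 * dotv (V1 - V0) F0.
  rewrite -dotvZl -dotvBl; by congr dotv; apply/matrixP=> ? ?; rewrite !mxE; field.
have e2 : dotv V0 Fm = dotv (2^-1 *: (Vm + V0)) Fm + 2^-1 * dotv (V0 - Vm) Fm.
  rewrite -dotvZl -dotvDl; by congr dotv; apply/matrixP=> ? ?; rewrite !mxE; field.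
rewrite dotvNr dotvZr dotvBr e1 e2 c1 c2 dotvZr dotvDr.
rewrite (dotv_sym _ u0 b0 _ s0) (dotv_sym _ u0 bm _ s1).
rewrite -!scalemxAr !mulmxDr !mulmxN !dotvZr !dotvDr !dotvNr.

by field.
Qed.

Section Tens.
Variables (K : nat) (M : 'I_K -> 'M[R]_K).
Hypothesis Ms1 : forall k l m, M k l m = M l k m.
Hypothesis Ms2 : forall k l m, M k l m = M k m l.

Lemma PmE z l m : Pm M z l m = \sum_k z k 0 * M k l m.
Proof. by rewrite /Pm summxE; apply: eq_bigr => k _; rewrite mxE. Qed.

Lemma Pm_sym z : (Pm M z)^T = Pm M z.
Proof.
by apply/matrixP => l m; rewrite mxE !PmE; apply: eq_bigr => k _; rewrite Ms2.
Qed.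

Lemma tensor u z : dotv u (Pm M z *m u) = dotv z (Pm M u *m u).
Proof.
transitivity (\sum_k \sum_l \sum_m z k 0 * (u l 0 * u m 0 * M k l m)).
  rewrite dotvE.
  transitivity (\sum_l \sum_k \sum_m z k 0 * (u l 0 * u m 0 * M k l m)); last first.
    by rewrite exchange_big.
  apply: eq_bigr => l _; rewrite exchange_big /= mxE big_distrr /=.
  apply: eq_bigr => m _; rewrite PmE big_distrl big_distrr /=.
  by apply: eq_bigr => k _; ring.
rewrite dotvE; apply: eq_bigr => k _; rewrite mxE big_distrr /=.
apply: eq_bigr => l _; rewrite PmE big_distrl big_distrr /=.
apply: eq_bigr => m _; rewrite (Ms1 m k l) (Ms2 k m l); ring.
Qed.
End Tens.

Lemma posdef_unit n (A : 'M[R]_n) : posdef A -> A \in unitmx.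
Proof.
move=> pA; rewrite unitmxE unitfE -det_tr; apply/negP => /det0P [v v0 vA].
have : v^T != 0 by rewrite trmx_eq0.
move=> /pA; rewrite (_ : A *m v^T = 0) ?dotv0r ?ltxx //.
by rewrite -[A]trmxK -trmx_mul vA trmx0.
Qed.

Lemma Mtens_s1 K rho phi k l m : @Mtens R K rho phi k l m = Mtens rho phi l k m.
Proof.
rewrite /Mtens !mxE; congr (Rintegral _ _ _); apply/funext => x /=; ring.
Qed.
Lemma Mtens_s2 K rho phi k l m : @Mtens R K rho phi k l m = Mtens rho phi k m l.
Proof.
rewrite /Mtens !mxE; congr (Rintegral _ _ _); apply/funext => x /=; ring.
Qed.
End Alg.

Set Implicit Arguments. Unset Strict Implicit.

Section An.
Variable R : realType.
Variable t : R.

Lemma rder_eq {f : R -> R} {a b} : is_derive t 1 f a -> a = b -> is_derive t 1 f b.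
Proof. by move=> ? <-. Qed.
Lemma rder_add {f g : R -> R} {a b} : is_derive t 1 f a -> is_derive t 1 g b ->
  is_derive t 1 (fun s => f s + g s) (a + b).
Proof. by move=> ha hb; exact: (is_deriveD ha hb). Qed.
Lemma rder_mul {f g : R -> R} {a b} : is_derive t 1 f a -> is_derive t 1 g b ->
  is_derive t 1 (fun s => f s * g s) (f t * b + g t * a).
Proof. by move=> ha hb; exact: (is_deriveM ha hb). Qed.
Lemma rder_cst (c : R) : is_derive t 1 (fun _ => c) 0.
Proof. exact: is_derive_cst. Qed.
Lemma rder_scal c {f : R -> R} {a} : is_derive t 1 f a ->
  is_derive t 1 (fun s => c * f s) (c * a).
Proof.
move=> ha; apply: rder_eq (rder_mul (rder_cst c) ha) _; by rewrite mulr0 addr0.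
Qed.
Lemma rder_sum (I : Type) (r : seq I) (P : pred I) {f : I -> R -> R} {df} :
  (forall i, is_derive t 1 (f i) (df i)) ->
  is_derive t 1 (fun s => \sum_(i <- r | P i) f i s) (\sum_(i <- r | P i) df i).
Proof.
move=> hf; elim: r => [|a r IH].
  rewrite big_nil; under eq_fun do rewrite big_nil; exact: rder_cst.
rewrite big_cons; under eq_fun do rewrite big_cons.
case: (P a) => //; exact: rder_add.
Qed.

Lemma dv_add {f g : R -> R} : derivable f t 1 -> derivable g t 1 ->
  derivable (fun s => f s + g s) t 1.
Proof. move=> ha hb; exact: (derivableD ha hb). Qed.
Lemma dv_mul {f g : R -> R} : derivable f t 1 -> derivable g t 1 ->
  derivable (fun s => f s * g s) t 1.
Proof. move=> ha hb; exact: (derivableM ha hb). Qed.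
Lemma dv_cst (c : R) : derivable (fun _ => c) t 1.
Proof. exact: derivable_cst. Qed.
Lemma dv_sum (I : Type) (r : seq I) (P : pred I) (f : I -> R -> R) :
  (forall i, derivable (f i) t 1) ->
  derivable (fun s => \sum_(i <- r | P i) f i s) t 1.
Proof.
move=> hf; elim: r => [|a r IH].
  under eq_fun do rewrite big_nil; exact: dv_cst.
under eq_fun do rewrite big_cons.
case: (P a) => //; exact: dv_add.
Qed.
Lemma dv_prod (I : Type) (r : seq I) (P : pred I) (f : I -> R -> R) :
  (forall i, derivable (f i) t 1) ->
  derivable (fun s => \prod_(i <- r | P i) f i s) t 1.
Proof.
move=> hf; elim: r => [|a r IH].
  under eq_fun do rewrite big_nil; exact: dv_cst.
under eq_fun do rewrite big_cons.
case: (P a) => //; exact: dv_mul.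
Qed.
Lemma dv_inv {f : R -> R} : f t != 0 -> derivable f t 1 ->
  derivable (fun s => (f s)^-1) t 1.
Proof. move=> h0 h; exact: derivableV. Qed.

Lemma dv_det n (X : R -> 'M[R]_n) :
  (forall i j, derivable (fun s => X s i j) t 1) ->
  derivable (fun s => \det (X s)) t 1.
Proof.
move=> hX; apply: dv_sum => sg; apply: dv_mul; first exact: dv_cst.
by apply: dv_prod => i; apply: hX.
Qed.


Definition mder m n (f : R -> 'M[R]_(m, n)) (df : 'M[R]_(m, n)) :=
  forall i j, is_derive t 1 (fun s => f s i j) (df i j).
Arguments mder {m n}.

Lemma mder_of m n (f : R -> 'M[R]_(m, n)) df : is_derive t 1 f df -> mder f df.
Proof.
move=> [hd hv] i j.
have hij := (derivable_mxP f t 1).1 hd i j.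
apply: DeriveDef => //.
by rewrite -hv derive_mx // mxE.
Qed.

Lemma mder_uniq m n (f : R -> 'M[R]_(m, n)) d1 d2 : mder f d1 -> mder f d2 -> d1 = d2.
Proof.
move=> h1 h2; apply/matrixP => i j.
by rewrite -(@derive_val _ _ _ _ _ _ _ (h1 i j)) -(@derive_val _ _ _ _ _ _ _ (h2 i j)).
Qed.

Lemma mder_ex m n (f : R -> 'M[R]_(m, n)) :
  (forall i j, derivable (fun s => f s i j) t 1) ->
  mder f (\matrix_(i, j) 'D_1 (fun s => f s i j) t).
Proof. by move=> h i j; rewrite mxE; apply: derivableP. Qed.

Lemma mder_cst m n (c : 'M[R]_(m, n)) : mder (fun _ => c) 0.
Proof. by move=> i j; rewrite mxE; exact: rder_cst. Qed.

Lemma mder_mul m n p (f : R -> 'M[R]_(m, n)) (g : R -> 'M[R]_(n, p)) df dg :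
  mder f df -> mder g dg -> mder (fun s => f s *m g s) (df *m g t + f t *m dg).
Proof.
move=> hf hg i j.
under eq_fun do rewrite mxE.
have hs := rder_sum (index_enum 'I_n) xpredT (fun k => rder_mul (hf i k) (hg k j)).
apply: (rder_eq hs).
rewrite !mxE -big_split /=; apply: eq_bigr => k _; ring.
Qed.

Lemma mder_tr m n (f : R -> 'M[R]_(m, n)) df : mder f df -> mder (fun s => (f s)^T) df^T.
Proof. by move=> hf i j; under eq_fun do rewrite mxE; rewrite mxE; exact: hf. Qed.

Lemma mder_usub m1 m2 n (f : R -> 'M[R]_(m1 + m2, n)) df :
  mder f df -> mder (fun s => usubmx (f s)) (usubmx df).
Proof. by move=> hf i j; under eq_fun do rewrite mxE; rewrite mxE; exact: hf. Qed.
Lemma mder_dsub m1 m2 n (f : R -> 'M[R]_(m1 + m2, n)) df :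
  mder f df -> mder (fun s => dsubmx (f s)) (dsubmx df).
Proof. by move=> hf i j; under eq_fun do rewrite mxE; rewrite mxE; exact: hf. Qed.

Lemma rder_dotv n (a b : R -> 'cV[R]_n) da db : mder a da -> mder b db ->
  is_derive t 1 (fun s => dotv (a s) (b s)) (dotv da (b t) + dotv (a t) db).
Proof.
move=> ha hb; have := mder_mul (mder_tr ha) hb 0 0.
by rewrite mxE.
Qed.

Lemma dv_invmx n (A : R -> 'M[R]_n) :
  (forall s, A s \in unitmx) ->
  (forall i j, derivable (fun s => A s i j) t 1) ->
  forall i j, derivable (fun s => invmx (A s) i j) t 1.
Proof.
move=> hu hA i j.
have -> : (fun s => invmx (A s) i j) =
   (fun s => (\det (A s))^-1 * ((-1) ^+ (j + i) * \det (row' j (col' i (A s))))).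
  by apply/funext => s; rewrite /invmx hu !mxE.
apply: dv_mul; last apply: dv_mul.
- apply: dv_inv; first by rewrite -unitfE -unitmxE.
  exact: dv_det.
- exact: dv_cst.
- apply: dv_det => p q; under eq_fun do rewrite !mxE; exact: hA.
Qed.

Lemma mder_inv n (A : R -> 'M[R]_n) dA :
  (forall s, A s \in unitmx) -> mder A dA ->
  mder (fun s => invmx (A s)) (- (invmx (A t) *m dA *m invmx (A t))).
Proof.
move=> hu hA.
have hW := mder_ex (dv_invmx hu (fun i j => @ex_derive _ _ _ _ _ _ _ (hA i j))).
set dW := \matrix_(i, j) _ in hW.
have h1 := mder_mul hA hW.
have e : (fun s => A s *m invmx (A s)) = (fun _ => 1%:M).
  by apply/funext => s; rewrite mulmxV.
rewrite e in h1.
have e2 := mder_uniq h1 (mder_cst _).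
have e3 : A t *m dW = - (dA *m invmx (A t)).
  by apply/eqP; rewrite -addr_eq0 addrC e2.
suff -> : - (invmx (A t) *m dA *m invmx (A t)) = dW by [].
by rewrite -[dW]mul1mx -(mulVmx (hu t)) -[_ *m _ *m dW]mulmxA e3 mulmxN !mulmxA.
Qed.

End An.

Set Implicit Arguments. Unset Strict Implicit.

Section En.
Variable R : realType.
Variable t : R.
Variables (K : nat) (M : 'I_K -> 'M[R]_K).
Hypothesis Ms1 : forall k l m, M k l m = M l k m.
Hypothesis Ms2 : forall k l m, M k l m = M k m l.

Lemma mder_Pm (H : R -> 'cV[R]_K) dH : mder t H dH -> mder t (fun s => Pm M (H s)) (Pm M dH).
Proof.
move=> hH i j; under eq_fun do rewrite PmE.
have hs := rder_sum (index_enum 'I_K) xpredT (fun k => rder_mul (hH k 0) (rder_cst t (M k i j))).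
apply: (rder_eq hs); rewrite PmE; apply: eq_bigr => k _; ring.
Qed.

Lemma energy_der g (H X Y : R -> 'cV[R]_K) (Bc : 'cV[R]_K) dH dX dY :
  (forall s, Pm M (H s) \in unitmx) -> mder t H dH -> mder t X dX -> mder t Y dY ->
  is_derive t 1 (fun s => energy M g (H s) (X s) (Y s) Bc)
    (dotv (entvar M g (H t) (X t) (Y t) Bc) (col_mx dH (col_mx dX dY))).
Proof.
move=> hu hH hX hY.
have hA := mder_Pm hH.
have hW := mder_inv hu hA.
have hu' := mder_mul hW hX.
have hv' := mder_mul hW hY.
have d1 := rder_dotv hX hu'.
have d2 := rder_dotv hY hv'.
have d3 := rder_dotv hH hH.
have d4 := rder_dotv hH (mder_cst t Bc).
have D := rder_add (rder_add (rder_scal (2^-1) (rder_add d1 d2)) (rder_scal (2^-1 * g) d3))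
                   (rder_scal g d4).
apply: (rder_eq D).
rewrite /entvar /vel.
set A := Pm M (H t); set W := invmx A.
set u := W *m X t; set v := W *m Y t.
have WT : W^T = W by rewrite /W trmx_inv /A Pm_sym.
have kX : forall y, dotv (X t) (W *m y) = dotv u y.
  by move=> y; rewrite dotv_mul WT.
have kY : forall y, dotv (Y t) (W *m y) = dotv v y.
  by move=> y; rewrite dotv_mul WT.
have eu : - (W *m Pm M dH *m W) *m X t + W *m dX = W *m (dX - Pm M dH *m u).
  by rewrite mulmxBr !mulmxA mulNmx addrC.
have ev : - (W *m Pm M dH *m W) *m Y t + W *m dY = W *m (dY - Pm M dH *m v).
  by rewrite mulmxBr !mulmxA mulNmx addrC.
rewrite eu ev kX kY !dotvBr (@tensor _ _ _ Ms1 Ms2 u dH) (@tensor _ _ _ Ms1 Ms2 v dH).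
rewrite !dotv_col !(dotvDl, dotvBl, dotvNl, dotvZl) dotv0r.
rewrite (@dotvC _ _ dX) (@dotvC _ _ dY) (@dotvC _ _ (H t) dH) (@dotvC _ _ (Pm M u *m u)) (@dotvC _ _ (Pm M v *m v)) (@dotvC _ _ Bc).
by field.
Qed.
End En.

Unset Implicit Arguments. Set Strict Implicit.

Lemma mder_ext {R : realType} {t : R} {m n} {f g : R -> 'M[R]_(m, n)} {d} :
  (forall s, f s = g s) -> mder t f d -> mder t g d.
Proof. by move=> e h i j; under eq_fun do rewrite -e; exact: h. Qed.

Theorem lemma4p4 (R : realType) (K : nat)
  (rho : R -> R) (phi : 'I_K -> {poly R}) (g dx dy : R)
  (h qx qy : int -> int -> R -> 'cV[R]_K) (B : int -> int -> 'cV[R]_K)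
  (F G : int -> int -> R -> 'cV[R]_(K + (K + K))) :
  (0 < K)%N ->
  prob_density rho -> orthonormal_polys rho phi ->
  0 < g -> 0 < dx -> 0 < dy ->
  let M := Mtens rho phi in
  (forall (i j : int) (t : R), posdef (Pm M (h i j t))) ->
  (* the semi-discrete scheme *)
  (forall (i j : int) (t : R),
     is_derive t 1 (UG h qx qy i j)
       (- (dx^-1 *: (F i j t - F (i - 1)%R j t))
        - dy^-1 *: (G i j t - G i (j - 1)%R t)
        + srcS M g h B dx dy i j t)) ->
  (* entropy-conservative flux conditions *)
  (forall (i j : int) (t : R),
     dotv (jmpx (fun a b => VG M g h qx qy B a b t) i j) (F i j t)
     = jmpxs (fun a b => PsiG M g h qx a b t) i j
       + g * dotv (jmpx B i j)
               (Pm M (avgx (fun a b => h a b t) i j)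
                *m avgx (fun a b => uG M h qx a b t) i j)) ->
  (forall (i j : int) (t : R),
     dotv (jmpy (fun a b => VG M g h qx qy B a b t) i j) (G i j t)
     = jmpys (fun a b => PhiG M g h qy a b t) i j
       + g * dotv (jmpy B i j)
               (Pm M (avgy (fun a b => h a b t) i j)
                *m avgy (fun a b => vG M h qy a b t) i j)) ->
  (* energy conservation *)
  forall (i j : int) (t : R),
    is_derive t 1 (EG M g h qx qy B i j)
      (- ((HfluxG M g h qx qy B F i j t - HfluxG M g h qx qy B F (i - 1)%R j t) / dx)
       - (KfluxG M g h qx qy B G i j t - KfluxG M g h qx qy B G i (j - 1)%R t) / dy).
Proof.
move=> K0 hrho hphi g0 dx0 dy0 M hpd hS hF hG i j t.
have Ms1 : forall k l m, M k l m = M l k m by move=> *; exact: Mtens_s1.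
have Ms2 : forall k l m, M k l m = M k m l by move=> *; exact: Mtens_s2.
have hu : forall a b s, Pm M (h a b s) \in unitmx by move=> *; apply: posdef_unit.
have hU := mder_of (hS i j t).
have hH : mder t (fun s => h i j s) (usubmx (- (dx^-1 *: (F i j t - F (i - 1)%R j t))
        - dy^-1 *: (G i j t - G i (j - 1)%R t) + srcS M g h B dx dy i j t)).
  by apply: (mder_ext _ (mder_usub hU)) => s; rewrite /UG /stateU col_mxKu.
have hX : mder t (fun s => qx i j s) (usubmx (dsubmx (- (dx^-1 *: (F i j t - F (i - 1)%R j t))
        - dy^-1 *: (G i j t - G i (j - 1)%R t) + srcS M g h B dx dy i j t))).
  by apply: (mder_ext _ (mder_usub (mder_dsub hU))) => s; rewrite /UG /stateU col_mxKd col_mxKu.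
have hY : mder t (fun s => qy i j s) (dsubmx (dsubmx (- (dx^-1 *: (F i j t - F (i - 1)%R j t))
        - dy^-1 *: (G i j t - G i (j - 1)%R t) + srcS M g h B dx dy i j t))).
  by apply: (mder_ext _ (mder_dsub (mder_dsub hU))) => s; rewrite /UG /stateU !col_mxKd.
have E := energy_der Ms1 Ms2 g (B i j) (hu i j) hH hX hY.
rewrite !vsubmxK in E.
apply: (rder_eq E).
rewrite -/(VG M g h qx qy B i j t).
have c1 := hF i j t; have c2 := hF (i - 1)%R j t.
have c3 := hG i j t; have c4 := hG i (j - 1)%R t.
rewrite /jmpx /jmpxs /avgx /jmpy /jmpys /avgy /= ?subrK in c1 c2 c3 c4.
rewrite /srcS /HfluxG /KfluxG /avgx /avgxs /avgy /avgys /jmpx /jmpxs /jmpy /jmpys /= !subrK.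
have X1 := @xdir _ _ _ _ _ _ _ _ _ _ _ _ _ _ _ _ _ _ _ _
  (@Pm_sym _ _ _ Ms2 _) (@Pm_sym _ _ _ Ms2 _) (lt0r_neq0 dx0) c1 c2.
have Y1 := @xdir _ _ _ _ _ _ _ _ _ _ _ _ _ _ _ _ _ _ _ _
  (@Pm_sym _ _ _ Ms2 _) (@Pm_sym _ _ _ Ms2 _) (lt0r_neq0 dy0) c3 c4.
rewrite dotvNr in Y1.
have hsrc : forall Sx Sy, dotv (VG M g h qx qy B i j t) (col_mx 0 (col_mx Sx Sy))
   = dotv (uG M h qx i j t) Sx + dotv (vG M h qy i j t) Sy.
  by move=> Sx Sy; rewrite /VG /entvar /= !dotv_col dotv0r add0r.
have comb : forall a b c d x y : R, a + c = x -> -b + d = y -> a - b + (c + d) = x + y.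
  by move=> a b c d x y <- <-; ring.
rewrite dotvDr dotvBr hsrc (comb _ _ _ _ _ _ X1 Y1).
by [].
Qed.
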